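(* Let $G_{\lambda,k}$ be a skeleton of a graph $G$ such that $G_{(\lambda,k)_{(2,2)}}$ contains an $M$-fat $H$ minor for some $M\ge6$. Then $G_{\lambda,k}$ contains an $(M+1)$-fat $H$ minor.
   Context: All graphs are connected (and unbounded); $d$ is the graph metric. Sets $X,Y$ are $r$-disjoint if $d(a,b)>r$ for all $a\in X,b\in Y$; $X$ is $k$-connected if any two of its points are joined by a finite sequence in $X$ with consecutive distances $\le k$. $H$ is an $M$-fat minor of a graph $\Gamma$ if there are connected subgraphs $B_v$ ($v\in V(H)$) and paths $P_e$ ($e\in E(H)$), $P_e$ joining $B_u$ to $B_v$ for $e=uv$, any two of which are $M$-disjoint unless they correspond to an incident vertex–edge pair of $H$. Skeleton $\Gamma_{\lambda,k}$ of a connected graph $\Gamma$ (root $x_0$, scale $\lambda\ge1$, connectivity $k\ge1$): layers $A_{N,\lambda}=\{x: N\lambda<d(x,x_0)\le(N+1)\lambda\}$, $N\in\mathbb Z$; blocks are maximal $k$-connected subsets of layers; $\Gamma_{\lambda,k}$ has a vertex per block and an edge between two blocks iff an edge of $\Gamma$ joins them. $G_{(\lambda,k)_{(2,2)}}$ is the $(2,2)$-skeleton of the graph $G_{\lambda,k}$, rooted at the block containing the root of $G$. *)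

(* Defs.v *)
From Stdlib Require Import Reals List Relations.
Import ListNotations.
Open Scope R_scope.

Section Graphs.
Variable V : Type.
Variable adj : V -> V -> Prop.

Definition simple_graph : Prop :=
  (forall x y, adj x y -> adj y x) /\ (forall x, ~ adj x x).

Inductive walkn : V -> V -> nat -> Prop :=
| walkn0 x : walkn x x 0
| walknS x y z n : adj x y -> walkn y z n -> walkn x z (S n).

Definition connected_graph : Prop := forall x y, exists n, walkn x y n.

Definition dist_le (x y : V) (n : nat) : Prop := exists m, (m <= n)%nat /\ walkn x y m.

Definition dist_eq (x y : V) (n : nat) : Prop :=
  walkn x y n /\ forall m, walkn x y m -> (n <= m)%nat.

Definition unbounded_graph (x0 : V) : Prop := forall n, exists x, ~ dist_le x0 x n.

Definition r_disjoint (r : nat) (X Y : V -> Prop) : Prop :=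
  forall a b, X a -> Y b -> ~ dist_le a b r.

(* X is k-connected: any two points joined by a finite sequence in X with
   consecutive distances <= k (distances measured in the ambient graph) *)
Definition k_connected (k : nat) (X : V -> Prop) : Prop :=
  forall x y, X x -> X y ->
    clos_refl_trans V (fun a b => X a /\ X b /\ dist_le a b k) x y.

Definition connected_subgraph (X : V -> Prop) : Prop :=
  (exists x, X x) /\
  forall x y, X x -> X y ->
    clos_refl_trans V (fun a b => X a /\ X b /\ adj a b) x y.

Fixpoint chain (l : list V) : Prop :=
  match l with
  | [] => True
  | x :: l' => match l' with [] => True | y :: _ => adj x y /\ chain l' end
  end.

Definition path_joining (p : list V) (X Y : V -> Prop) : Prop :=
  exists x y, hd_error p = Some x /\ last p x = y /\ X x /\ Y y /\
  NoDup p /\ chain p.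

Definition layer (x0 : V) (lam : R) (N : Z) (x : V) : Prop :=
  exists n, dist_eq x0 x n /\ IZR N * lam < INR n /\ INR n <= (IZR N + 1) * lam.

Definition is_block (x0 : V) (lam : R) (k : nat) (B : V -> Prop) : Prop :=
  exists N : Z,
    (forall x, B x -> layer x0 lam N x) /\
    (exists x, B x) /\
    k_connected k B /\
    (forall Y : V -> Prop, (forall x, B x -> Y x) -> (forall x, Y x -> layer x0 lam N x) ->
       k_connected k Y -> forall x, Y x -> B x).

End Graphs.

Definition skel_vert (V : Type) (adj : V -> V -> Prop) (x0 : V) (lam : R) (k : nat) : Type :=
  { B : V -> Prop | is_block V adj x0 lam k B }.

Definition skel_adj (V : Type) (adj : V -> V -> Prop) (x0 : V) (lam : R) (k : nat)
  (B C : skel_vert V adj x0 lam k) : Prop :=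
  proj1_sig B <> proj1_sig C /\
  exists x y, proj1_sig B x /\ proj1_sig C y /\ adj x y.

Definition fat_minor (VH : Type) (adjH : VH -> VH -> Prop)
  (V : Type) (adj : V -> V -> Prop) (M : nat) : Prop :=
  exists (B : VH -> V -> Prop) (P : VH -> VH -> list V),
    (forall v, connected_subgraph V adj (B v)) /\
    (forall u v, adjH u v -> path_joining V adj (P u v) (B u) (B v) /\ P v u = rev (P u v)) /\
    (forall u v, u <> v -> r_disjoint V adj M (B u) (B v)) /\
    (* edge / edge, for distinct edges {u,v} <> {u',v'} *)
    (forall u v u' v', adjH u v -> adjH u' v' ->
       ~ ((u = u' /\ v = v') \/ (u = v' /\ v = u')) ->
       r_disjoint V adj M (fun x => In x (P u v)) (fun x => In x (P u' v'))) /\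
    (forall w u v, adjH u v -> w <> u -> w <> v ->
       r_disjoint V adj M (B w) (fun x => In x (P u v))).

(* Main.v *)
Require Import Defs.
From Stdlib Require Import Reals List Relations Arith Lia ZArith Lra.
From Stdlib Require Import Classical ClassicalEpsilon FunctionalExtensionality PropExtensionality.
Import ListNotations.

Definition lay (n : nat) : Z := ((Z.of_nat n - 1) / 2)%Z.

Lemma three d0 d1 d2 : (d1 <= d0+1 -> d0 <= d1+1 -> d2 <= d1+1 -> d1 <= d2+1 ->
  lay d0 = lay d1 \/ lay d0 = lay d2 \/ lay d1 = lay d2)%nat.
Proof. unfold lay; intros. Z.div_mod_to_equations. lia. Qed.

Lemma layZ (N : Z) (n : nat) : (IZR N * 2 < INR n /\ INR n <= (IZR N + 1) * 2)%R <-> N = lay n.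
Proof. unfold lay. rewrite INR_IZR_INZ. split.
- intros [H1 H2]. assert (N*2 < Z.of_nat n)%Z. { apply lt_IZR. rewrite mult_IZR. lra. }
  assert (Z.of_nat n <= (N+1)*2)%Z. { apply le_IZR. rewrite mult_IZR, plus_IZR. lra. }
  Z.div_mod_to_equations. lia.
- intros ->. set (m := Z.of_nat n). assert (((m-1)/2)*2 < m /\ m <= ((m-1)/2 + 1)*2)%Z by (Z.div_mod_to_equations; lia).
  destruct H as [H1 H2]. apply IZR_lt in H1. apply IZR_le in H2. rewrite mult_IZR in H1. rewrite mult_IZR, plus_IZR in H2. lra.
Qed.

Lemma arith1 (L : nat) : ((S (S L) + 1)/2 = 1 + (L+1)/2 /\ (S L + 1)/2 <= (S (S L)+1)/2 /\ (L+1)/2 <= (S (S L)+1)/2)%nat.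
Proof. assert (E : ((S (S L) + 1)/2 = (L+1)/2 + 1)%nat).
 { replace (S (S L) + 1)%nat with ((L+1) + 1*2)%nat by lia. apply Nat.div_add. lia. }
 rewrite E. split; [lia|]. split; [|lia]. rewrite <- E. apply Nat.Div0.div_le_mono; lia. Qed.

Lemma arith2 (M m : nat) : (3 <= M -> m <= M + 3 -> (m+1)/2 <= M)%nat.
Proof. intros. assert ((m+1)/2 < M+1)%nat; [|lia]. apply Nat.Div0.div_lt_upper_bound. lia. Qed.

Lemma sig_ext {T} {P : T -> Prop} (a b : sig P) : proj1_sig a = proj1_sig b -> a = b.
Proof. destruct a, b; simpl; intros; subst; f_equal; apply proof_irrelevance. Qed.

Lemma rt_mono {T} (R1 R2 : relation T) : (forall a b, R1 a b -> R2 a b) ->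
  forall x y, clos_refl_trans T R1 x y -> clos_refl_trans T R2 x y.
Proof. intros H x y Hr; induction Hr; eauto using rt_step, rt_refl, rt_trans. Qed.

Lemma rt_sym {T} (R1 : relation T) : (forall a b, R1 a b -> R1 b a) ->
  forall x y, clos_refl_trans T R1 x y -> clos_refl_trans T R1 y x.
Proof. intros H x y Hr; induction Hr; eauto using rt_step, rt_refl, rt_trans. Qed.

Lemma walkn_app {X} (A : X -> X -> Prop) x y z m n :
  walkn X A x y m -> walkn X A y z n -> walkn X A x z (m + n).
Proof. induction 1; simpl; auto. intros; econstructor; eauto. Qed.

Lemma walkn_snoc {X} (A : X -> X -> Prop) x y z n :
  walkn X A x y n -> A y z -> walkn X A x z (S n).
Proof. intros H1 H2. replace (S n) with (n + 1)%nat by lia. eapply walkn_app; eauto.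
  econstructor; eauto. constructor. Qed.

Lemma walkn_rev {X} (A : X -> X -> Prop) (Asym : forall x y, A x y -> A y x) x y n :
  walkn X A x y n -> walkn X A y x n.
Proof. induction 1. constructor. eapply walkn_snoc; eauto. Qed.

Lemma dist_le_sym {X} (A : X -> X -> Prop) (Asym : forall x y, A x y -> A y x) x y n :
  dist_le X A x y n -> dist_le X A y x n.
Proof. intros [m [Hm Hw]]. exists m; split; auto. apply walkn_rev; auto. Qed.

Lemma dist_le_trans {X} (A : X -> X -> Prop) x y z m n :
  dist_le X A x y m -> dist_le X A y z n -> dist_le X A x z (m + n).
Proof. intros [a [Ha Hw]] [b [Hb Hw']]. exists (a+b)%nat; split; [lia|]. eapply walkn_app; eauto. Qed.

Lemma dist_le_mono {X} (A : X -> X -> Prop) x y m n :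
  dist_le X A x y m -> (m <= n)%nat -> dist_le X A x y n.
Proof. intros [a [Ha Hw]] H. exists a; split; [lia|auto]. Qed.

Lemma dist_le_refl {X} (A : X -> X -> Prop) x : dist_le X A x x 0.
Proof. exists 0%nat; split; [lia|constructor]. Qed.

Lemma dist_le_adj {X} (A : X -> X -> Prop) x y : A x y -> dist_le X A x y 1.
Proof. exists 1%nat; split; [lia|]. econstructor; eauto. constructor. Qed.

Lemma dist_exists {X} (A : X -> X -> Prop) r x n : walkn X A r x n -> exists m, dist_eq X A r x m.
Proof.
  revert x. induction n as [n IH] using lt_wf_ind. intros x Hw.
  destruct (classic (forall m, walkn X A r x m -> (n <= m)%nat)) as [H|H].
  - exists n; split; auto.
  - apply not_all_ex_not in H. destruct H as [m Hm].
    apply imply_to_and in Hm. destruct Hm as [Hm1 Hm2]. apply (IH m); auto. lia.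
Qed.

Lemma dist_eq_uniq {X} (A : X -> X -> Prop) r x n m : dist_eq X A r x n -> dist_eq X A r x m -> n = m.
Proof. intros [H1 H2] [H3 H4]. specialize (H2 _ H3). specialize (H4 _ H1). lia. Qed.

Lemma dist_step {X} (A : X -> X -> Prop) (Asym : forall x y, A x y -> A y x) r a p da dp :
  dist_eq X A r a da -> A a p -> dist_eq X A r p dp -> (dp <= da + 1 /\ da <= dp + 1)%nat.
Proof. intros [H1 H2] Ha [H3 H4]. split.
  - replace (da+1)%nat with (S da) by lia. apply H4. eapply walkn_snoc; eauto.
  - replace (dp+1)%nat with (S dp) by lia. apply H2. eapply walkn_snoc; eauto.
Qed.

Lemma layer_iff {X} (A : X -> X -> Prop) r N x :
  layer X A r 2%R N x <-> exists n, dist_eq X A r x n /\ N = lay n.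
Proof. unfold layer. split.
  - intros [n [Hd Hl]]. exists n; split; auto. apply layZ; auto.
  - intros [n [Hd Hl]]. exists n; split; auto. apply layZ; auto.
Qed.

Lemma block_dist {X} (A : X -> X -> Prop) r S a :
  is_block X A r 2%R 2 S -> S a -> exists n, dist_eq X A r a n /\
   (forall x, S x -> exists m, dist_eq X A r x m /\ lay m = lay n).
Proof.
  intros [N [HL _]] Ha. destruct (proj1 (layer_iff A r N a) (HL a Ha)) as [n [Hn ->]].
  exists n; split; auto. intros x Hx. destruct (proj1 (layer_iff A r _ x) (HL x Hx)) as [m [Hm E]].
  exists m; split; auto.
Qed.

Lemma absorb {X} (A : X -> X -> Prop) r S a n (Z : X -> Prop) :
  is_block X A r 2%R 2 S -> S a -> dist_eq X A r a n -> Z a ->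
  (forall x, Z x -> exists m, dist_eq X A r x m /\ lay m = lay n) ->
  k_connected X A 2 Z -> forall x, Z x -> S x.
Proof.
  intros HB Sa Ha Za HZ KZ.
  pose proof HB as [N [HL [_ [KS Hmax]]]].
  assert (EN : N = lay n).
  { destruct (proj1 (layer_iff A r N a) (HL a Sa)) as [n' [Hn' ->]].
    f_equal. eapply dist_eq_uniq; eauto. }
  subst N. intros x0 Hx0.
  apply (Hmax (fun x => S x \/ Z x)); [auto| | |right; exact Hx0].
  - intros x [Hx|Hx]; auto. destruct (HZ x Hx) as [m [Hm E]]. apply layer_iff. exists m; split; auto.
  - assert (LS : forall x y, S x -> S y -> clos_refl_trans X (fun a b => (S a \/ Z a) /\ (S b \/ Z b) /\ dist_le X A a b 2) x y).
    { intros x y Hx Hy. eapply rt_mono; [|apply KS; auto]. simpl. intuition. }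
    assert (LZ : forall x y, Z x -> Z y -> clos_refl_trans X (fun a b => (S a \/ Z a) /\ (S b \/ Z b) /\ dist_le X A a b 2) x y).
    { intros x y Hx Hy. eapply rt_mono; [|apply KZ; auto]. simpl. intuition. }
    intros x y [Hx|Hx] [Hy|Hy].
    + apply LS; auto.
    + apply rt_trans with a; [apply LS; auto|apply LZ; auto].
    + apply rt_trans with a; [apply LZ; auto|apply LS; auto].
    + apply LZ; auto.
Qed.

Lemma block_exists {X} (A : X -> X -> Prop) (Asym : forall x y, A x y -> A y x) r p n :
  dist_eq X A r p n -> exists b : skel_vert X A r 2%R 2, proj1_sig b p.
Proof.
  intros Hp.
  set (R0 := fun a b => layer X A r 2%R (lay n) a /\ layer X A r 2%R (lay n) b /\ dist_le X A a b 2).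
  set (C := fun q => clos_refl_trans X R0 p q).
  assert (Lp : layer X A r 2%R (lay n) p). { apply layer_iff. eauto. }
  assert (CL : forall q, C q -> layer X A r 2%R (lay n) q).
  { assert (G : forall u v, clos_refl_trans X R0 u v -> layer X A r 2%R (lay n) u -> layer X A r 2%R (lay n) v). { intros u v Huv; induction Huv as [u v H| |]; intros; auto. destruct H as [? [? ?]]; auto. } intros q Hq; apply (G p q); auto. }
  assert (HB : is_block X A r 2%R 2 C).
  { exists (lay n). split; [exact CL|]. split; [exists p; apply rt_refl|]. split.
    - assert (Hsym : forall a b, (fun a b => C a /\ C b /\ dist_le X A a b 2) a b ->
                                   (fun a b => C a /\ C b /\ dist_le X A a b 2) b a).
      { intros a b [? [? ?]]; repeat split; auto. apply dist_le_sym; auto. }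
      assert (Hp2 : forall q, C q -> clos_refl_trans X (fun a b => C a /\ C b /\ dist_le X A a b 2) p q).
      { intros q Hq. pose proof Hq as Hq'. unfold C in Hq'. apply clos_rt_rtn1 in Hq'.
        induction Hq'. apply rt_refl.
        assert (Cy : C y). { apply clos_rtn1_rt; auto. }
        eapply rt_trans; [apply IHHq'; auto|]. apply rt_step. repeat split; auto. apply H. }
      intros x y Hx Hy. eapply rt_trans; [apply rt_sym; [exact Hsym|]; apply Hp2; auto|apply Hp2; auto].
    - intros Y HY HYL KY x Hx. unfold C.
      eapply rt_mono; [|apply KY; [apply HY; apply rt_refl|exact Hx]].
      intros a b [? [? ?]]. unfold R0. repeat split; auto. }
  exists (exist _ C HB). simpl. apply rt_refl.
Qed.

Lemma block_uniq {X} (A : X -> X -> Prop) r (b c : skel_vert X A r 2%R 2) a :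
  proj1_sig b a -> proj1_sig c a -> b = c.
Proof.
  intros Hb Hc. apply sig_ext.
  destruct b as [B HB], c as [C HC]; simpl in *.
  destruct (block_dist A r B a HB Hb) as [n [Hn HBl]].
  destruct (block_dist A r C a HC Hc) as [n' [Hn' HCl]].
  assert (n' = n) by (eapply dist_eq_uniq; eauto). subst n'.
  apply functional_extensionality; intro x. apply propositional_extensionality. split; intro H.
  - eapply (absorb A r C a n B); eauto. destruct HB as [? [? [? [? ?]]]]; auto.
  - eapply (absorb A r B a n C); eauto. destruct HC as [? [? [? [? ?]]]]; auto.
Qed.

Lemma same_block {X} (A : X -> X -> Prop) (Asym : forall x y, A x y -> A y x) r
  (b : skel_vert X A r 2%R 2) a p n m :
  proj1_sig b a -> dist_eq X A r a n -> dist_eq X A r p m -> lay m = lay n ->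
  dist_le X A a p 2 -> proj1_sig b p.
Proof.
  intros Hb Ha Hp E D. destruct b as [B HB]; simpl in *.
  apply (absorb A r B a n (fun x => x = a \/ x = p)); auto.
  - intros x [->| ->]; eauto.
  - intros x y Hx Hy.
    assert (S1 : forall x y, (x = a \/ x = p) -> (y = a \/ y = p) -> dist_le X A x y 2).
    { intros u v [->| ->] [->| ->]; auto using dist_le_sym.
      all: eapply dist_le_mono; [apply dist_le_refl|lia]. }
    apply rt_step. repeat split; auto.
Qed.

Definition Y2 {X} (A : X -> X -> Prop) r := skel_vert X A r 2%R 2.
Definition A2 {X} (A : X -> X -> Prop) r := skel_adj X A r 2%R 2.

Lemma edge_block {X} (A : X -> X -> Prop) r (b c : skel_vert X A r 2%R 2) a p :
  A a p -> proj1_sig b a -> proj1_sig c p -> dist_le _ (skel_adj X A r 2%R 2) b c 1.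
Proof.
  intros H Hb Hc. destruct (classic (proj1_sig b = proj1_sig c)) as [E|E].
  - apply sig_ext in E. subst. eapply dist_le_mono; [apply dist_le_refl|lia].
  - apply dist_le_adj. split; auto. exists a, p; auto.
Qed.

Lemma compress {X} (A : X -> X -> Prop) (Asym : forall x y, A x y -> A y x) r :
  forall L a b, walkn X A a b L -> forall (be ga : skel_vert X A r 2%R 2),
  proj1_sig be a -> proj1_sig ga b -> dist_le _ (skel_adj X A r 2%R 2) be ga ((L+1)/2).
Proof.
  intro L. induction L as [L IH] using lt_wf_ind. intros a b Hw be ga Hb Hg.
  destruct L as [|[|L]].
  - inversion Hw; subst. rewrite (block_uniq A r be ga b); auto. apply dist_le_refl.
  - inversion Hw; subst. inversion H3; subst. simpl. eapply edge_block; eauto.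
  - inversion Hw; subst. rename y into p1. inversion H3; subst. rename y into p2.
    destruct (proj2_sig be) as [N [HL _]].
    destruct (proj1 (layer_iff A r N a) (HL a Hb)) as [d0 [D0 _]].
    assert (W1 : walkn X A r p1 (S d0)) by (eapply walkn_snoc; [apply D0|auto]).
    destruct (dist_exists A r p1 _ W1) as [d1 D1].
    assert (W2 : walkn X A r p2 (S d1)) by (eapply walkn_snoc; [apply D1|auto]).
    destruct (dist_exists A r p2 _ W2) as [d2 D2].
    destruct (dist_step A Asym r a p1 d0 d1) as [I1 I2]; auto.
    destruct (dist_step A Asym r p1 p2 d1 d2) as [I3 I4]; auto.
    destruct (block_exists A Asym r p1 d1 D1) as [b1 Hb1].
    pose proof (arith1 L) as [E1 [E2 E3]].
    destruct (three d0 d1 d2) as [T|[T|T]]; auto.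
    + assert (proj1_sig be p1).
      { eapply same_block; eauto. eapply dist_le_mono; [apply dist_le_adj; eauto|lia]. }
      eapply dist_le_mono; [eapply (IH (S L)); eauto|lia].
    + assert (proj1_sig be p2).
      { eapply same_block; eauto. exists 2%nat. split; auto. econstructor; eauto. econstructor; eauto. constructor. }
      eapply dist_le_mono; [eapply (IH L); eauto|lia].
    + assert (proj1_sig b1 p2).
      { eapply same_block; eauto. eapply dist_le_mono; [apply dist_le_adj; eauto|lia]. }
      rewrite E1. apply dist_le_trans with b1; [apply (edge_block A r be b1 a p1); auto|]. eapply (IH L); [lia|exact H5|exact H|exact Hg].
Qed.

Definition near {X} (A : X -> X -> Prop) r (S : skel_vert X A r 2%R 2 -> Prop) (x : X) : Prop :=
  exists be : skel_vert X A r 2%R 2, S be /\ exists a, proj1_sig be a /\ dist_le X A a x 1.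

Lemma near_mono {X} (A : X -> X -> Prop) r (S T : skel_vert X A r 2%R 2 -> Prop) :
  (forall b, S b -> T b) -> forall x, near A r S x -> near A r T x.
Proof. intros H x [b [Sb R]]. exists b; split; auto. Qed.

Lemma near_base {X} (A : X -> X -> Prop) r (S : skel_vert X A r 2%R 2 -> Prop) b a :
  S b -> proj1_sig b a -> near A r S a.
Proof. intros. exists b; split; auto. exists a; split; auto. eapply dist_le_mono; [apply dist_le_refl|lia]. Qed.

Lemma rdisj_mono {X} (A : X -> X -> Prop) M (S T S' T' : X -> Prop) :
  r_disjoint X A M S T -> (forall x, S' x -> S x) -> (forall x, T' x -> T x) -> r_disjoint X A M S' T'.
Proof. intros H H1 H2 a b Ha Hb. apply H; auto. Qed.

Lemma fat_near {X} (A : X -> X -> Prop) (Asym : forall x y, A x y -> A y x) r M (HM : (3 <= M)%nat)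
  (S T : skel_vert X A r 2%R 2 -> Prop) :
  r_disjoint _ (skel_adj X A r 2%R 2) M S T -> r_disjoint X A (M+1) (near A r S) (near A r T).
Proof.
  intros H x y [be [Sb [a [Ha Da]]]] [ga [Tg [b [Hb Db]]]] Dxy.
  assert (D : dist_le X A a b (1 + (M+1) + 1)).
  { eapply dist_le_trans; [eapply dist_le_trans; eauto|]. apply dist_le_sym; auto. }
  destruct D as [m [Hm Hw]]. apply (H be ga Sb Tg).
  eapply dist_le_mono; [eapply compress; eauto|apply arith2; lia].
Qed.

Definition NR {X} (A : X -> X -> Prop) r S := fun a b => near A r S a /\ near A r S b /\ A a b.

Lemma NR_sym {X} (A : X -> X -> Prop) (Asym : forall x y, A x y -> A y x) r S :
  forall a b, NR A r S a b -> NR A r S b a.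
Proof. intros a b [? [? ?]]; repeat split; auto. Qed.

Lemma within_block {X} (A : X -> X -> Prop) (Asym : forall x y, A x y -> A y x) r S
  (be : skel_vert X A r 2%R 2) a a' :
  S be -> proj1_sig be a -> proj1_sig be a' -> clos_refl_trans X (NR A r S) a a'.
Proof.
  intros Sb Ha Ha'. destruct (proj2_sig be) as [N [_ [_ [K _]]]].
  assert (Step : forall c c', proj1_sig be c -> proj1_sig be c' -> dist_le X A c c' 2 -> clos_refl_trans X (NR A r S) c c').
  { intros c c' Hc Hc' [m [Hm Hw]].
    destruct m as [|[|[|m]]]; try lia.
    + inversion Hw; subst. apply rt_refl.
    + inversion Hw; subst. inversion H3; subst. apply rt_step. repeat split; auto.
      all: eapply near_base; eauto.
    + inversion Hw; subst. inversion H3; subst. inversion H5; subst. rename y into q.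
      assert (Nq : near A r S q). { exists be; split; auto. exists c; split; auto. apply dist_le_adj; auto. }
      apply rt_trans with q; apply rt_step; repeat split; auto; eapply near_base; eauto. }
  specialize (K a a' Ha Ha'). apply clos_rt_rt1n in K.
  induction K as [x| x y z [Hx [Hy D]] K IH]. apply rt_refl.
  apply rt_trans with y; auto.
Qed.

Lemma blocks_connect {X} (A : X -> X -> Prop) (Asym : forall x y, A x y -> A y x) r S :
  forall be ga, clos_refl_trans _ (fun b c => S b /\ S c /\ skel_adj X A r 2%R 2 b c) be ga -> S be ->
  forall a a', proj1_sig be a -> proj1_sig ga a' -> clos_refl_trans X (NR A r S) a a'.
Proof.
  intros be ga H. apply clos_rt_rt1n in H. induction H as [be|be de ga [Sb [Sd [_ [c [c' [Hc [Hc' Ac]]]]]]] H IH]; intros Sb0 a a' Ha Ha'.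
  - eapply within_block; eauto.
  - apply rt_trans with c; [eapply within_block; eauto|].
    apply rt_trans with c'; [apply rt_step; split; [eapply near_base; eauto|split; [apply (near_base A r S de c'); auto|auto]]|].
    apply (IH Sd c' a' Hc' Ha').
Qed.

Lemma near_to_base {X} (A : X -> X -> Prop) (Asym : forall x y, A x y -> A y x) r S x :
  near A r S x -> exists be a, S be /\ proj1_sig be a /\ clos_refl_trans X (NR A r S) a x.
Proof.
  intros Hx. pose proof Hx as [be [Sb [a [Ha [m [Hm Hw]]]]]]. exists be, a. split; auto. split; auto.
  destruct m as [|[|m]]; try lia.
  - inversion Hw; subst. apply rt_refl.
  - inversion Hw; subst. inversion H3; subst. apply rt_step. repeat split; auto. eapply near_base; eauto.
Qed.

Lemma near_connected {X} (A : X -> X -> Prop) (Asym : forall x y, A x y -> A y x) r S :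
  connected_subgraph _ (skel_adj X A r 2%R 2) S -> connected_subgraph X A (near A r S).
Proof.
  intros [[b0 Sb0] C]. split.
  - destruct (proj2_sig b0) as [N [_ [[a Ha] _]]]. exists a. eapply near_base; eauto.
  - intros x y Hx Hy.
    destruct (near_to_base A Asym r S x Hx) as [be [a [Sb [Ha Rx]]]].
    destruct (near_to_base A Asym r S y Hy) as [ga [b [Sg [Hb Ry]]]].
    apply rt_trans with a; [apply rt_sym; [apply NR_sym; auto|exact Rx]|].
    apply rt_trans with b; auto. apply (blocks_connect A Asym r S be ga); auto.
Qed.

Lemma chain_tail {X} (A : X -> X -> Prop) a l : chain X A (a :: l) -> chain X A l.
Proof. destruct l; simpl; tauto. Qed.

Lemma chain_app_r {X} (A : X -> X -> Prop) l1 l2 : chain X A (l1 ++ l2) -> chain X A l2.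
Proof. induction l1; simpl; auto. intros H. apply IHl1. eapply chain_tail; eauto. Qed.

Lemma last_nonempty {X} (l : list X) d d' : l <> [] -> last l d = last l d'.
Proof. induction l; intros H; [congruence|]. destruct l; auto. simpl. apply IHl. congruence. Qed.

Lemma last_app_cons {X} (l1 l2 : list X) x d : last (l1 ++ x :: l2) d = last (x :: l2) d.
Proof. induction l1; auto. simpl. rewrite IHl1. destruct l1; simpl; auto. Qed.

Lemma path_from_rt {X} (A : X -> X -> Prop) (Z : X -> Prop) x y :
  clos_refl_trans X (fun a b => Z a /\ Z b /\ A a b) x y -> Z x ->
  exists p, hd_error p = Some x /\ last p x = y /\ NoDup p /\ chain X A p /\ (forall z, In z p -> Z z).
Proof.
  intros H. apply clos_rt_rt1n in H. induction H as [x|x z y [Zx [Zz Axz]] H IH]; intros Zx0.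
  - exists [x]. simpl. repeat split; auto. constructor; auto. constructor. intros z [->|[]]; auto.
  - destruct (IH Zz) as [p [Hh [Hl [Hn [Hc Hin]]]]].
    destruct p as [|z' p]; [discriminate|]. simpl in Hh. inversion Hh; subst z'.
    destruct (classic (In x (z :: p))) as [I|I].
    + apply in_split in I. destruct I as [l1 [l2 E]].
      exists (x :: l2). split; auto. split.
      * rewrite E in Hl. rewrite last_app_cons in Hl. rewrite <- Hl. apply last_nonempty. congruence.
      * split; [rewrite E in Hn; eapply NoDup_app_remove_l; eauto|]. split.
        -- rewrite E in Hc. eapply chain_app_r; eauto.
        -- intros w Hw. apply Hin. rewrite E. apply in_or_app. right; auto.
    + exists (x :: z :: p). split; auto. split.
      * change (last (z :: p) x = y). rewrite <- Hl. apply last_nonempty. congruence.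
      * split; [constructor; auto|]. split; [simpl; split; auto|].
        intros w [<-|Hw]; auto.
Qed.

Lemma chain_cat {X} (A : X -> X -> Prop) : forall l1 l2 a b,
  chain X A (l1 ++ [a]) -> A a b -> chain X A (b :: l2) -> chain X A (l1 ++ a :: b :: l2).
Proof.
  induction l1 as [|c l1 IH]; intros l2 a b H1 H2 H3; simpl in *.
  - auto.
  - destruct l1 as [|d l1]; simpl in *.
    + destruct H1; auto.
    + destruct H1 as [H1 H1']. split; auto. apply (IH l2 a b); auto.
Qed.

Lemma chain_rev {X} (A : X -> X -> Prop) (Asym : forall x y, A x y -> A y x) l :
  chain X A l -> chain X A (rev l).
Proof.
  assert (G : forall l a, chain X A (a :: l) -> chain X A (rev l ++ [a])).
  { intros l0; induction l0 as [|b l1 IH]; intros a H; simpl; auto.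
    destruct H as [H1 H2]. rewrite <- app_assoc. simpl. apply chain_cat; auto. simpl; auto. }
  destruct l; simpl; auto.
Qed.

Lemma hd_rev {X} (l : list X) x : hd_error l = Some x -> hd_error (rev l) = Some (last l x).
Proof.
  intros H. destruct l as [|a l]; [discriminate|].
  destruct (exists_last (l:=a::l) ltac:(congruence)) as [l0 [y E]]. rewrite E.
  rewrite rev_app_distr, last_last. reflexivity.
Qed.

Lemma last_rev {X} (l : list X) x d : hd_error l = Some x -> last (rev l) d = x.
Proof. intros H. destruct l as [|a l]; [discriminate|]. simpl in *. inversion H; subst. apply last_last. Qed.

Lemma path_rev {X} (A : X -> X -> Prop) (Asym : forall x y, A x y -> A y x) l (S T : X -> Prop) :
  path_joining X A l S T -> path_joining X A (rev l) T S.
Proof.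
  intros [x [y [Hh [Hl [Sx [Ty [Hn Hc]]]]]]]. exists y, x. repeat split; auto.
  - rewrite <- Hl. apply hd_rev; auto.
  - apply last_rev; auto.
  - apply NoDup_rev; auto.
  - apply chain_rev; auto.
Qed.

Lemma palin {X} (A : X -> X -> Prop) l (S T : X -> Prop) :
  path_joining X A l S T -> l = rev l -> exists x, S x /\ T x.
Proof.
  intros [x [y [Hh [Hl [Sx [Ty _]]]]]] E. exists x. split; auto.
  pose proof (hd_rev l x Hh) as H. rewrite <- E, Hh, Hl in H. inversion H; subst; auto.
Qed.

Lemma chain_rt {X} (A : X -> X -> Prop) (S : X -> Prop) : forall l x,
  chain X A l -> hd_error l = Some x -> (forall z, In z l -> S z) ->
  forall z, In z l -> clos_refl_trans X (fun a b => S a /\ S b /\ A a b) x z.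
Proof.
  induction l as [|a l IH]; intros x Hc Hh HS z Hz; [destruct Hz|].
  simpl in Hh; inversion Hh; subst a. destruct Hz as [<-|Hz]; [apply rt_refl|].
  destruct l as [|b l]; [destruct Hz|]. destruct Hc as [Ab Hc].
  apply rt_trans with b. apply rt_step; repeat split; auto; apply HS; simpl; auto.
  apply IH; auto. intros w Hw; apply HS; simpl; auto.
Qed.

Definition canon {T} (l : list T) : list T :=
  epsilon (inhabits []) (fun l' => l' = l \/ l' = rev l).

Lemma canon_rev {T} (l : list T) : canon (rev l) = canon l.
Proof.
  unfold canon. f_equal. apply functional_extensionality; intro l'.
  apply propositional_extensionality. rewrite rev_involutive. tauto.
Qed.

Lemma canon_spec {T} (l : list T) : canon l = l \/ canon l = rev l.
Proof. unfold canon. apply epsilon_spec. exists l; auto. Qed.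

Lemma last_in_cons {T} (l : list T) a d : In (last (a :: l) d) (a :: l).
Proof. revert a; induction l as [|b l IH]; intros a; simpl; auto.
  right. apply IH. Qed.

Lemma main_gen (X : Type) (A : X -> X -> Prop) (Asym : forall x y, A x y -> A y x) (r : X)
  (VH : Type) (adjH : VH -> VH -> Prop) (HH : simple_graph VH adjH) (M : nat) (HM : (3 <= M)%nat) :
  fat_minor VH adjH (skel_vert X A r 2%R 2) (skel_adj X A r 2%R 2) M ->
  fat_minor VH adjH X A (M + 1).
Proof.
  intros [B [P [HB [HP [Hvv [Hee Hve]]]]]].
  destruct HH as [Hsym Hirr].
  set (SP := fun u v => fun be => In be (P u v)).
  set (good := fun u v (l : list X) =>
     path_joining X A l (near A r (B u)) (near A r (B v)) /\ forall z, In z l -> near A r (SP u v) z).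
  assert (Ex : forall u v, adjH u v -> exists l, good u v l).
  { intros u v Huv. destruct (HP u v Huv) as [[be [ga [Hh [Hl [Bb [Bg [Hn Hc]]]]]]] _].
    destruct (proj2_sig be) as [N1 [_ [[a Ha] _]]].
    destruct (proj2_sig ga) as [N2 [_ [[a' Ha'] _]]].
    assert (Ib : In be (P u v)). { destruct (P u v); [discriminate|]. simpl in Hh. inversion Hh; simpl; auto. }
    assert (Ig : In ga (P u v)). { subst ga. destruct (P u v) as [|p0 l]; [discriminate|]. simpl in Hh. inversion Hh; subst. apply last_in_cons. }
    assert (R : clos_refl_trans X (NR A r (SP u v)) a a').
    { apply (blocks_connect A Asym r (SP u v) be ga); auto.
      apply (chain_rt _ (SP u v) (P u v) be); auto. }
    destruct (path_from_rt A (near A r (SP u v)) a a' R) as [p [Hp1 [Hp2 [Hp3 [Hp4 Hp5]]]]].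
    { apply (near_base A r (SP u v) be a); auto. }
    exists p. split; auto. exists a, a'. repeat split; auto; eapply near_base; eauto. }
  set (f := fun u v => epsilon (inhabits []) (good u v)).
  assert (Hf : forall u v, adjH u v -> good u v (f u v)).
  { intros u v H. unfold f. apply epsilon_spec. auto. }
  set (P' := fun u v => if excluded_middle_informative (canon (P u v) = P u v) then f u v else rev (f v u)).
  assert (Hgood : forall u v, adjH u v -> good u v (P' u v)).
  { intros u v H. unfold P'. destruct (excluded_middle_informative _); auto.
    destruct (Hf v u (Hsym _ _ H)) as [G1 G2]. split.
    - apply path_rev; auto.
    - intros z Hz. apply in_rev in Hz. eapply near_mono; [|apply G2; auto].
      intros b Hb. unfold SP in *. destruct (HP u v H) as [_ E]. rewrite E in Hb. apply in_rev; auto. }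
  exists (fun v => near A r (B v)), P'.
  split; [intro v; apply near_connected; auto|].
  split.
  { intros u v H. split; [apply Hgood; auto|].
    destruct (HP u v H) as [Pj E].
    assert (NE : P u v <> rev (P u v)).
    { intros E'. destruct (palin _ _ _ _ Pj E') as [x [Bx Bx']].
      refine (Hvv u v _ x x Bx Bx' (dist_le_mono _ x x 0 M (dist_le_refl _ x) (Nat.le_0_l M))). intros ->; eapply Hirr; eauto. }
    unfold P'. rewrite E, canon_rev.
    destruct (excluded_middle_informative (canon (P u v) = P u v)) as [C1|C1];
    destruct (excluded_middle_informative (canon (P u v) = rev (P u v))) as [C2|C2].
    - congruence.
    - reflexivity.
    - rewrite rev_involutive. reflexivity.
    - destruct (canon_spec (P u v)); congruence. }
  split.
  { intros u v Huv. apply fat_near; auto. }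
  split.
  { intros u v u' v' H H' Hn. eapply rdisj_mono; [apply (fat_near A Asym r M HM (SP u v) (SP u' v'))|
      apply (Hgood u v H)|apply (Hgood u' v' H')]. apply Hee; auto. }
  { intros w u v H Hw1 Hw2. eapply rdisj_mono; [apply (fat_near A Asym r M HM (B w) (SP u v))|
      auto|apply (Hgood u v H)]. apply Hve; auto. }
Qed.

Open Scope R_scope.

Theorem corollary10
  (V : Type) (adj : V -> V -> Prop) (x0 : V)
  (HG : simple_graph V adj) (Hconn : connected_graph V adj)
  (Hunb : unbounded_graph V adj x0)
  (lam : R) (k : nat) (Hlam : 1 <= lam) (Hk : (1 <= k)%nat)
  (r : skel_vert V adj x0 lam k) (Hr : proj1_sig r x0)
  (VH : Type) (adjH : VH -> VH -> Prop) (HH : simple_graph VH adjH)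
  (M : nat) (HM : (6 <= M)%nat) :
  fat_minor VH adjH
    (skel_vert (skel_vert V adj x0 lam k) (skel_adj V adj x0 lam k) r 2 2)
    (skel_adj (skel_vert V adj x0 lam k) (skel_adj V adj x0 lam k) r 2 2) M ->
  fat_minor VH adjH (skel_vert V adj x0 lam k) (skel_adj V adj x0 lam k) (M + 1).
Proof.
  intros Hfat.
  assert (Asym : forall B C, skel_adj V adj x0 lam k B C -> skel_adj V adj x0 lam k C B).
  { intros B C [Hne [x [y [Bx [Cy Axy]]]]]. split; [auto|].
    exists y, x. repeat split; auto. apply (proj1 HG); auto. }
  apply (main_gen _ (skel_adj V adj x0 lam k) Asym r VH adjH HH M); [lia|exact Hfat].
Qed.
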